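(* Let $A_{1}\in \mathbb{C}^{m\times n}$, $b_{1}\in \mathbb{C}^{m}$, $A_{2}\in \mathbb{C}^{k\times n}$ with $r(A_{2})=k\geq 1$, and $b_{2}\in \mathbb{C}^{k}$. Let $D_{2}$ be an arbitrary but fixed matrix with $R(D_{2})=N(A_{2})$, and define \[ \Xi =\{D_{2}(A_{1}D_{2})^{\dagger}A_{1}A_{1}^{\dagger}b_{1}+(I-D_{2}(A_{1}D_{2})^{\dagger}A_{1})(A_{2}^{\dagger}b_{2}+z):z\in N(A_{2})\}. \] Assume further that $r(A_{1})=n$. Then \[ D_{2}(A_{1}D_{2})^{\dagger}A_{1}=P_{N(A_{2}),\,(A_{1}^{*}A_{1})^{-1}R(A_{2}^{*})}, \] and $\Xi$ is a singleton, \[ \Xi=\{A_{1}^{\dagger}b_{1}+(A_{1}^{*}A_{1})^{-1}A_{2}^{*}\big(A_2 (A_{1}^{*}A_{1})^{-1}A_{2}^{*}\big)^{-1}(b_{2}-A_{2}A_{1}^{\dagger}b_{1})\}. \]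
   Context: $A^{*}$ is the conjugate transpose, $A^{\dagger}$ the Moore–Penrose inverse, $r(A)$, $R(A)$, $N(A)$ the rank, range and null space of $A$. For complementary subspaces $L,M$ of $\mathbb{C}^n$ (i.e. $L+M=\mathbb{C}^n$, $L\cap M=\{0\}$), $P_{L,M}$ denotes the oblique projector onto $L$ along $M$ (the idempotent matrix with range $L$ and null space $M$). For a matrix $B$ and subspace $S$, $BS=\{Bs:s\in S\}$. (It is known that every solution of $\min_{x}\|A_1x-b_1\|^2$ subject to $A_2x=b_2$ lies in $\Xi$.) *)

(* Defs.v *)
From HB Require Import structures.
From mathcomp Require Import all_boot all_order all_algebra all_field.
From Stdlib Require Import ClassicalEpsilon.
Set Implicit Arguments. Unset Strict Implicit. Unset Printing Implicit Defensive.
Import GRing.Theory Num.Theory.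
Local Open Scope ring_scope.

Definition ctr {m n : nat} (A : 'M[algC]_(m, n)) : 'M[algC]_(n, m) :=
  (map_mx (@Num.conj _) A)^T.

Definition is_mpinv {m n : nat} (A : 'M[algC]_(m, n)) (X : 'M[algC]_(n, m)) : Prop :=
  [/\ A *m X *m A = A, X *m A *m X = X,
      ctr (A *m X) = A *m X & ctr (X *m A) = X *m A].

Definition mpinv {m n : nat} (A : 'M[algC]_(m, n)) : 'M[algC]_(n, m) :=
  epsilon (inhabits 0) (is_mpinv A).

Definition range {n p : nat} (A : 'M[algC]_(n, p)) : 'cV[algC]_n -> Prop :=
  fun x => exists y : 'cV[algC]_p, x = A *m y.
Definition nullsp {k n : nat} (A : 'M[algC]_(k, n)) : 'cV[algC]_n -> Prop :=
  fun x => A *m x = 0.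
Definition image_sub {n q : nat} (B : 'M[algC]_(n, q)) (S : 'cV[algC]_q -> Prop)
  : 'cV[algC]_n -> Prop := fun x => exists2 s, S s & x = B *m s.
Definition sub_eq {n : nat} (S T : 'cV[algC]_n -> Prop) : Prop :=
  forall x, S x <-> T x.

Definition is_oblique_proj {n : nat} (P : 'M[algC]_n) (L M : 'cV[algC]_n -> Prop) : Prop :=
  [/\ (forall x, exists l mm, [/\ L l, M mm & x = l + mm]),
      (forall x, L x -> M x -> x = 0),
      P *m P = P,
      sub_eq (range P) L
    & sub_eq (nullsp P) M].

Definition Xi {m n k p : nat} (A1 : 'M[algC]_(m, n)) (b1 : 'cV[algC]_m)
  (A2 : 'M[algC]_(k, n)) (b2 : 'cV[algC]_k) (D2 : 'M[algC]_(n, p))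
  : 'cV[algC]_n -> Prop :=
  fun x => exists2 z, nullsp A2 z &
    x = D2 *m mpinv (A1 *m D2) *m A1 *m mpinv A1 *m b1
        + (1%:M - D2 *m mpinv (A1 *m D2) *m A1) *m (mpinv A2 *m b2 + z).

(* Main.v *)
Require Import Defs.
From mathcomp Require Import all_boot all_order all_algebra all_field.
From Stdlib Require Import ClassicalEpsilon.
Import GRing.Theory Num.Theory.
Set Implicit Arguments. Unset Strict Implicit.
Local Open Scope ring_scope.

Lemma ctrM m n q (A : 'M[algC]_(m, n)) (B : 'M[algC]_(n, q)) :
  ctr (A *m B) = ctr B *m ctr A.
Proof. by rewrite /ctr map_mxM trmx_mul. Qed.

Lemma ctrK m n (A : 'M[algC]_(m, n)) : ctr (ctr A) = A.
Proof. by apply/matrixP=> i j; rewrite /ctr !mxE conjCK. Qed.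

Lemma ctrD m n (A B : 'M[algC]_(m, n)) : ctr (A + B) = ctr A + ctr B.
Proof. by rewrite /ctr map_mxD linearD. Qed.

Lemma ctrN m n (A : 'M[algC]_(m, n)) : ctr (- A) = - ctr A.
Proof. by rewrite /ctr map_mxN linearN. Qed.

Lemma ctr0 m n : ctr (0 : 'M[algC]_(m, n)) = 0.
Proof. by rewrite /ctr map_mx0 trmx0. Qed.

Lemma ctr1 n : ctr (1%:M : 'M[algC]_n) = 1%:M.
Proof. by rewrite /ctr map_mx1 trmx1. Qed.

Lemma ctrV n (A : 'M[algC]_n) : ctr (invmx A) = invmx (ctr A).
Proof. by rewrite /ctr map_invmx trmx_inv. Qed.

Lemma rank_ctr m n (A : 'M[algC]_(m, n)) : \rank (ctr A) = \rank A.
Proof. by rewrite /ctr mxrank_tr mxrank_map. Qed.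

Lemma ctr_self0 m (y : 'cV[algC]_m) : ctr y *m y = 0 -> y = 0.
Proof.
move=> H; have := congr1 (fun M : 'M[algC]_1 => M 0 0) H; rewrite !mxE => Hs.
have Hz: forall i, `|y i 0| ^+ 2 = 0.
  move=> i; apply: (psumr_eq0P (P := predT) (F := fun i => `|y i 0| ^+ 2)) => //.
  by move=> j _; rewrite exprn_ge0.
  rewrite -[RHS]Hs; apply: eq_bigr => j _; by rewrite normCKC !mxE.
apply/matrixP=> i j; rewrite (ord1 j) mxE.
by have := Hz i; move/eqP; rewrite expf_eq0 /= normr_eq0 => /eqP.
Qed.

Lemma col_inj m r (F : 'M[algC]_(m, r)) : \rank F = r ->
  forall x : 'cV_r, F *m x = 0 -> x = 0.
Proof.
move=> hr x hx; have hf : row_free F^T by rewrite /row_free mxrank_tr hr.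
apply: trmx_inj; apply: (row_free_inj hf); by rewrite -trmx_mul hx !trmx0 mul0mx.
Qed.

Lemma col_unit r (H : 'M[algC]_r) : (forall x : 'cV_r, H *m x = 0 -> x = 0) ->
  H \in unitmx.
Proof.
move=> hi; rewrite -unitmx_tr -row_free_unit; apply/inj_row_free => v hv.
apply: trmx_inj; rewrite trmx0; apply: hi; by rewrite -[H]trmxK -trmx_mul hv trmx0.
Qed.

Lemma mx_ext m n (A B : 'M[algC]_(m, n)) : (forall x : 'cV_n, A *m x = B *m x) -> A = B.
Proof.
move=> h; apply/matrixP=> i j; have := congr1 (fun M : 'M[algC]_(m,1) => M i 0) (h (delta_mx j 0)).
by rewrite -!colE !mxE.
Qed.

Lemma gram_unit m r (F : 'M[algC]_(m, r)) : \rank F = r -> (ctr F *m F) \in unitmx.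
Proof.
move=> hr; apply: col_unit => x hx; apply: (col_inj hr); apply: ctr_self0.
by rewrite ctrM -mulmxA (mulmxA (ctr F)) hx mulmx0.
Qed.

Lemma herm3 m r (F : 'M[algC]_(m, r)) (H : 'M[algC]_r) : ctr H = H ->
  ctr (F *m H *m ctr F) = F *m H *m ctr F.
Proof. by move=> h; rewrite !ctrM ctrK h mulmxA. Qed.

Lemma mpinv_exists m n (M : 'M[algC]_(m, n)) : exists X, is_mpinv M X.
Proof.
set F := col_base M; set G := row_base M.
have hF : \rank F = \rank M by apply/eqP; exact: col_base_full.
have hG : \rank (ctr G) = \rank M by rewrite rank_ctr; apply/eqP; exact: row_base_free.
have uF := gram_unit hF; have uG := gram_unit hG; rewrite ctrK in uG.
set HF := ctr F *m F in uF *; set HG := G *m ctr G in uG *.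
have eMX : forall p (Y : 'M_(n, p)), M *m Y = F *m G *m Y by move=> p Y; rewrite /F /G mulmx_base.
have eXM : forall p (Y : 'M_(p, m)), Y *m M = Y *m (F *m G) by move=> p Y; rewrite /F /G mulmx_base.
have eM : F *m G = M by rewrite /F /G mulmx_base.
clearbody F G.
exists (ctr G *m invmx HG *m invmx HF *m ctr F).
set X := ctr G *m invmx HG *m invmx HF *m ctr F.
have MX : M *m X = F *m invmx HF *m ctr F.
  rewrite eMX /X !mulmxA -(mulmxA F G) -/HG -(mulmxA F HG) mulmxV // mulmx1 //.
have XM : X *m M = ctr G *m invmx HG *m G.
  rewrite eXM /X !mulmxA -(mulmxA _ (ctr F) F) -/HF -(mulmxA _ (invmx HF) HF) mulVmx // mulmx1 //.
split.
- rewrite MX eXM !mulmxA -(mulmxA _ (ctr F) F) -/HF -(mulmxA _ (invmx HF) HF) mulVmx // mulmx1 eM //.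
- rewrite XM /X !mulmxA -(mulmxA _ G (ctr G)) -/HG -(mulmxA _ (invmx HG) HG) mulVmx // mulmx1 //.
- have hh : ctr (invmx HF) = invmx HF by rewrite ctrV /HF ctrM ctrK.
  by rewrite MX herm3.
- have hh : ctr (invmx HG) = invmx HG by rewrite ctrV /HG ctrM ctrK.
  by rewrite XM; have := herm3 (ctr G) hh; rewrite ctrK.
Qed.

Lemma mpinvP m n (M : 'M[algC]_(m, n)) : is_mpinv M (mpinv M).
Proof.
rewrite /mpinv; case: (mpinv_exists M) => X hX.
exact: (epsilon_spec (inhabits 0) (is_mpinv M) (ex_intro _ X hX)).
Qed.

Theorem corollary3 (m n k p : nat) (A1 : 'M[algC]_(m, n)) (b1 : 'cV[algC]_m)
  (A2 : 'M[algC]_(k, n)) (b2 : 'cV[algC]_k) (D2 : 'M[algC]_(n, p)) :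
  \rank A2 = k -> (0 < k)%N ->
  sub_eq (range D2) (nullsp A2) ->
  \rank A1 = n ->
  is_oblique_proj (D2 *m mpinv (A1 *m D2) *m A1)
    (nullsp A2) (image_sub (invmx (ctr A1 *m A1)) (range (ctr A2)))
  /\
  (forall x, Xi A1 b1 A2 b2 D2 x <->
     x = mpinv A1 *m b1
         + invmx (ctr A1 *m A1) *m ctr A2
           *m invmx (A2 *m invmx (ctr A1 *m A1) *m ctr A2)
           *m (b2 - A2 *m mpinv A1 *m b1)).
Proof.
move=> rA2 _ hRD rA1.
have hD : forall y : 'cV_p, A2 *m (D2 *m y) = 0.
  by move=> y; exact: (proj1 (hRD (D2 *m y)) (ex_intro _ y erefl)).
have A2D2 : A2 *m D2 = 0 by apply: mx_ext => y; rewrite -mulmxA hD mul0mx.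
have hN : forall w : 'cV_n, A2 *m w = 0 -> exists v, w = D2 *m v.
  by move=> w hw; exact: (proj2 (hRD w) hw).
have inj1 := col_inj rA1.
have uU : (ctr A1 *m A1) \in unitmx := gram_unit rA1.
set U := ctr A1 *m A1 in uU *.
set G := invmx U.
have UG : U *m G = 1%:M by rewrite mulmxV.
have rA2c : \rank (ctr A2) = k by rewrite rank_ctr.
have uS : (A2 *m G *m ctr A2) \in unitmx.
  apply: col_unit => y hy.
  set u := G *m (ctr A2 *m y).
  have Au : A2 *m u = 0 by rewrite /u !mulmxA.
  have Uu : U *m u = ctr A2 *m y by rewrite /u mulmxA UG mul1mx.
  have A1u : A1 *m u = 0.
    apply: ctr_self0; rewrite ctrM -mulmxA (mulmxA (ctr A1)) -/U Uu.
    by rewrite mulmxA -ctrM Au ctr0 mul0mx.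
  have u0 : u = 0 := inj1 _ A1u.
  by apply: (col_inj rA2c); rewrite -Uu u0 mulmx0.
set S := A2 *m G *m ctr A2 in uS *.
set Q := G *m ctr A2 *m invmx S *m A2.
have A2Q : A2 *m Q = A2.
  by rewrite /Q !mulmxA -/S mulmxV // mul1mx.
set M := A1 *m D2.
set X := mpinv M.
have [h1 h2 h3 h4] := mpinvP M; rewrite -/X in h1 h2 h3 h4.
set P := D2 *m X *m A1.
have Xe : X = X *m ctr X *m ctr M.
  by rewrite -mulmxA -ctrM h3 mulmxA h2.
have PQ0 : forall y : 'cV_k, P *m (G *m (ctr A2 *m y)) = 0.
  move=> y; rewrite /P Xe /M ctrM !mulmxA.
  rewrite -(mulmxA _ (ctr A1) A1) -/U -(mulmxA _ U G) UG mulmx1.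
  by rewrite -(mulmxA _ (ctr D2)) -ctrM A2D2 ctr0 mulmx0 mul0mx.
have Pfix : forall w : 'cV_n, A2 *m w = 0 -> P *m w = w.
  move=> w /hN [v ->]; apply/eqP; rewrite -subr_eq0; apply/eqP.
  have -> : P *m (D2 *m v) - D2 *m v = D2 *m (X *m M *m v - v).
    by rewrite mulmxBr /P /M !mulmxA.
  apply: inj1; rewrite mulmxA -/M mulmxBr !mulmxA -(mulmxA _ A1 D2) -/M h1 subrr //.
have Peq : P = 1%:M - Q.
  apply: mx_ext => x.
  have ex : x = (1%:M - Q) *m x + G *m (ctr A2 *m (invmx S *m A2 *m x)).
    by rewrite mulmxBl mul1mx /Q !mulmxA subrK.
  rewrite {1}ex mulmxDr PQ0 addr0 Pfix //.
  by rewrite mulmxA mulmxBr A2Q mulmx1 subrr mul0mx.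
have A2P : forall x : 'cV_n, A2 *m (P *m x) = 0.
  by move=> x; rewrite Peq mulmxA mulmxBr A2Q mulmx1 subrr mul0mx.
have A2W : A2 *m mpinv A2 = 1%:M.
  have [g1 _ _ _] := mpinvP A2.
  have hf : row_free A2 by rewrite /row_free rA2.
  by apply: (row_free_inj hf); rewrite /= g1 mul1mx.
set K := G *m ctr A2 *m invmx S.
have QK : Q = K *m A2 by [].
have key : forall z : 'cV_n, A2 *m z = 0 ->
  P *m mpinv A1 *m b1 + (1%:M - P) *m (mpinv A2 *m b2 + z) =
  mpinv A1 *m b1 + K *m (b2 - A2 *m mpinv A1 *m b1).
  move=> z hz; set Z := mpinv A1 *m b1.
  have e1 : 1%:M - (1%:M - Q) = Q by rewrite opprB addrC subrK.
  rewrite -mulmxA -/Z Peq e1 mulmxDr {2}QK -(mulmxA K A2 z) hz mulmx0 addr0.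
  rewrite -mulmxA mulmxBr mulmxBl mul1mx.
  have -> : K *m b2 = Q *m (mpinv A2 *m b2) by rewrite QK !mulmxA -(mulmxA K) A2W mulmx1.
  by rewrite (mulmxA K A2 (mpinv A1 *m b1)) -QK -/Z addrA addrAC.
split.
  split.
  - move=> x; exists ((1%:M - Q) *m x); exists (Q *m x); split.
    + by rewrite /nullsp mulmxA mulmxBr A2Q mulmx1 subrr mul0mx.
    + exists (ctr A2 *m (invmx S *m A2 *m x)); first by exists (invmx S *m A2 *m x).
      by rewrite /Q !mulmxA.
    + by rewrite mulmxBl mul1mx subrK.
  - move=> x hx [s [y ey] ex]; subst s x.
    have hy : S *m y = 0 by move: hx; rewrite /nullsp /S !mulmxA.
    have y0 : y = 0 by rewrite -(mulKmx uS y) hy mulmx0.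
    by rewrite y0 !mulmx0.
  - by apply: mx_ext => x; rewrite -mulmxA Pfix // A2P.
  - move=> x; split.
    + by move=> [y ->]; apply: A2P.
    + by move=> hx; exists x; rewrite Pfix.
  - move=> x; split.
    + move=> hx; exists (ctr A2 *m (invmx S *m A2 *m x)); first by exists (invmx S *m A2 *m x).
      have : (1%:M - Q) *m x = 0 by rewrite -Peq.
      rewrite mulmxBl mul1mx => /eqP; rewrite subr_eq0 => /eqP {1}->.
      by rewrite /Q !mulmxA.
    + by move=> [s [y ->] ->]; rewrite /nullsp PQ0.
move=> x; rewrite /Xi -/M -/X -/P; split.
  by move=> [z hz ->]; apply: key.
move=> ->; exists 0; first by rewrite /nullsp mulmx0.
by rewrite key // mulmx0.
Qed.
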